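(* Let $t$ be a positive integer, let $\mathbb{F}_{2^t}=\{\alpha_1,\ldots,\alpha_{2^t}\}$ be the finite field of order $2^t$, fix a group isomorphism $(\mathbb{F}_{2^t},+)\cong\mathbb{Z}_2^t$, and define $\phi:\mathbb{F}_{2^t}\to GL_{2^t}(\mathbb{R})$ by $\phi(x)=r^{x_1}\otimes\cdots\otimes r^{x_t}$ where $(x_1,\ldots,x_t)\in\mathbb{Z}_2^t$ is the image of $x$ and $r=\begin{pmatrix}0&1\\1&0\end{pmatrix}$. Let $W=(w_{kl})_{k,l=1}^{2^t}$ be a Hadamard matrix of order $2^t$, and for $i\in\{1,\ldots,2^t\}$ let $W_i$ be the $2^{2t}\times2^{2t}$ block matrix whose $(k,l)$-block is $w_{kl}\phi(\alpha_i\alpha_l)$. Then for any distinct $i,j\in\{1,\ldots,2^t\}$, $W_iW_j^\top$ is a Bush-type Hadamard matrix of order $2^{2t}$.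
   Context: A Hadamard matrix of order $n$ is an $n\times n$ $(1,-1)$-matrix $H$ with $HH^\top=nI_n$. A Hadamard matrix $H$ of order $n^2$ is of Bush-type if, partitioned into $n\times n$ blocks $H=(H_{ij})_{i,j=1}^n$, it satisfies $H_{ii}=J_n$ for all $i$ and $H_{ij}J_n=J_nH_{ij}=O_n$ for all $i\neq j$, where $J_n$ is the all-ones and $O_n$ the zero $n\times n$ matrix. *)

(* Defs.v *)
From HB Require Import structures.
From mathcomp Require Import all_boot all_order all_algebra all_field.
From mathcomp Require Import mxtens.
From mathcomp Require Import reals.
Set Implicit Arguments. Unset Strict Implicit. Unset Printing Implicit Defensive.
Import Order.TTheory GRing.Theory Num.Theory.
Local Open Scope ring_scope.

Section Defs.
Variable R : realType.

Definition hadamard (n : nat) (H : 'M[R]_n) : Prop :=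
  (forall i j, H i j = 1 \/ H i j = -1) /\ H *m H^T = (n%:R)%:M.

(* The (k,l) block (of size m x m) of a matrix of order n*m, blocks indexed
   row-major: row index k*m + a  <->  (k, a). *)
Definition block (n m : nat) (H : 'M[R]_(n * m)) (k l : 'I_n) : 'M[R]_m :=
  \matrix_(a, b) H (mxtens_index (k, a)) (mxtens_index (l, b)).

Definition blockmx (n m : nat) (B : 'I_n -> 'I_n -> 'M[R]_m) : 'M[R]_(n * m) :=
  \matrix_(p, q) B (mxtens_unindex p).1 (mxtens_unindex q).1
                   (mxtens_unindex p).2 (mxtens_unindex q).2.

Definition bush_type (n : nat) (H : 'M[R]_(n * n)) : Prop :=
  hadamard H /\
  (forall k, block H k k = const_mx 1) /\
  (forall k l, k != l ->
     block H k l *m (const_mx 1 : 'M[R]_n) = 0 /\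
     (const_mx 1 : 'M[R]_n) *m block H k l = 0).

Definition rmat : 'M[R]_2 := \matrix_(a, b) (if a == b then 0 else 1).

Fixpoint kron_pow (t : nat) (e : nat -> nat) : 'M[R]_(2 ^ t) :=
  match t return 'M[R]_(2 ^ t) with
  | 0 => 1%:M
  | t'.+1 => castmx (esym (expnS 2 t'), esym (expnS 2 t'))
               (rmat ^+ e 0%N *t kron_pow t' (fun k => e k.+1))
  end.

Definition phi (F : finFieldType) (t : nat) (iso : F -> 'rV['Z_2]_t) (x : F)
  : 'M[R]_(2 ^ t) :=
  kron_pow t (fun k => match insub k with
                       | Some i => nat_of_ord (iso x 0 i)
                       | None => 0%N
                       end).

Definition Wmat (F : finFieldType) (t : nat) (iso : F -> 'rV['Z_2]_t)
  (alpha : 'I_(2 ^ t) -> F) (W : 'M[R]_(2 ^ t)) (i : 'I_(2 ^ t))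
  : 'M[R]_(2 ^ t * 2 ^ t) :=
  blockmx (fun k l => W k l *: phi iso (alpha i * alpha l)).

End Defs.

(* Main.v *)
Require Import Defs.
From HB Require Import structures.
From mathcomp Require Import all_boot all_order all_algebra all_field.
From mathcomp Require Import mxtens.
From mathcomp Require Import reals.
Import Order.TTheory GRing.Theory Num.Theory.
Local Open Scope ring_scope.
Set Implicit Arguments. Unset Strict Implicit. Unset Printing Implicit Defensive.

Fixpoint bitsv (t : nat) : 'I_(2 ^ t) -> nat -> bool :=
  match t return 'I_(2 ^ t) -> nat -> bool with
  | 0 => fun _ _ => false
  | t'.+1 => fun a k =>
      let pq := mxtens_unindex (cast_ord (expnS 2 t') a) in
      match k with 0 => odd pq.1 | k'.+1 => bitsv pq.2 k' end
  end.

Section S.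
Variable R : realType.

Lemma rmat2 : rmat R * rmat R = 1.
Proof.
apply/matrixP => a b; rewrite !mxE !big_ord_recl big_ord0 !mxE.
by case: a => [[|[|?]] ?] //; case: b => [[|[|?]] ?] //=; rewrite ?mulr0 ?mul0r ?mulr1 ?addr0 ?add0r.
Qed.

Lemma rmatX n : rmat R ^+ n = if odd n then rmat R else 1.
Proof.
elim: n => [|n IH]; first by rewrite expr0.
rewrite exprS IH /=; case: (odd n) => /=; by rewrite ?rmat2 ?mulr1.
Qed.

Lemma rmatXE n (p q : 'I_2) :
  (rmat R ^+ n) p q = (odd n == (odd p (+) odd q))%:R.
Proof.
rewrite rmatX; case: (odd n); rewrite !mxE;
by case: p => [[|[|?]] ?] //; case: q => [[|[|?]] ?] //=.
Qed.

Lemma forall_ordS t (P : 'I_t.+1 -> bool) :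
  [forall k, P k] = P ord0 && [forall k : 'I_t, P (lift ord0 k)].
Proof.
apply/forallP/andP => [H|[H0 /forallP H] k]; first by split => //; apply/forallP.
by case: (unliftP ord0 k) => [j ->|->].
Qed.

Lemma kron_powE t (e : nat -> nat) a b :
  kron_pow R t e a b =
  ([forall k : 'I_t, odd (e k) == (bitsv a k (+) bitsv b k)])%:R.
Proof.
elim: t e a b => [|t IH] e a b.
  rewrite /= mxE (ord1 a) (ord1 b) eqxx; case: fintype.forallP => // H; by exfalso; apply: H => -[].
rewrite [LHS]/= castmxE mxE IH forall_ordS.
have E : forall (p : (2 ^ t.+1 = 2 * 2 ^ t)%N) x, cast_ord p x = cast_ord (expnS 2 t) x.
  by move=> p x; apply: val_inj.
rewrite rmatXE -natrM mulnb !E.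
by [].
Qed.
End S.


Lemma bits_inj t (a b : 'I_(2 ^ t)) :
  (forall k, (k < t)%N -> bitsv a k = bitsv b k) -> a = b.
Proof.
elim: t a b => [|t IH] a b H; first by rewrite (ord1 a) (ord1 b).
apply: (@cast_ord_inj _ _ (expnS 2 t)).
apply: (can_inj (@mxtens_unindexK _ _)).
set ua := mxtens_unindex (cast_ord (expnS 2 t) a).
set ub := mxtens_unindex (cast_ord (expnS 2 t) b).
have H0 : odd ua.1 = odd ub.1 := H 0%N isT.
have HS : forall k, (k < t)%N -> bitsv ua.2 k = bitsv ub.2 k := fun k Hk => H k.+1 Hk.
clearbody ua ub; clear H.
case: ua H0 HS => p q; case: ub => p' q' /= Hp /IH ->.
congr (_, _); apply: val_inj => /=.
by move: Hp; case: p => [[|[|?]] ?]; case: p' => [[|[|?]] ?].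
Qed.

Definition beta t (a : 'I_(2 ^ t)) : 'rV['Z_2]_t := \row_k (bitsv a k)%:R.

Lemma beta_inj t : injective (@beta t).
Proof.
move=> a b /rowP H; apply: bits_inj => k Hk.
have := H (Ordinal Hk); rewrite !mxE /=.
by case: (bitsv a k); case: (bitsv b k).
Qed.

Lemma card_rowZ2 t : #|{: 'rV['Z_2]_t}| = (2 ^ t)%N.
Proof. by rewrite card_mx card_ord mul1n. Qed.

Lemma beta_bij t : bijective (@beta t).
Proof. by apply: inj_card_bij; [exact: beta_inj | rewrite card_rowZ2 card_ord]. Qed.

Lemma Z2_cases (z : 'Z_2) : z = 0 \/ z = 1.
Proof.
case: z => [[|[|m]] Hm]; [left|right|by []]; exact: val_inj.
Qed.

Lemma phiE (R : realType) (F : finFieldType) t (iso : F -> 'rV['Z_2]_t) x a b :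
  phi R iso x a b = (iso x == beta a + beta b)%:R.
Proof.
rewrite /phi kron_powE; congr (nat_of_bool _)%:R.
apply/fintype.forallP/eqP => [H|->].
  apply/rowP => k; have := H k; rewrite valK !mxE.
  case: (Z2_cases (iso x 0 k)) => ->;
  by case: (bitsv a k); case: (bitsv b k) => //= _; apply: val_inj.
move=> k; rewrite valK !mxE.
by case: (bitsv a k); case: (bitsv b k).
Qed.


Lemma addZ2vv t (v : 'rV['Z_2]_t) : v + v = 0.
Proof.
apply/rowP => k; rewrite !mxE; case: (Z2_cases (v 0 k)) => ->; exact: val_inj.
Qed.

Lemma eq_sw t (u v w : 'rV['Z_2]_t) : (u == v + w) = (w == v + u).
Proof.
apply/eqP/eqP => ->; by rewrite addrA addZ2vv add0r.
Qed.

Lemma L1 t (x u v : 'rV['Z_2]_t) : x + (v + (u + x)) = u + v.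
Proof.
apply/rowP => k; rewrite !mxE.
by case: (Z2_cases (x 0 k)) => ->; case: (Z2_cases (u 0 k)) => ->;
  case: (Z2_cases (v 0 k)) => ->; apply: val_inj.
Qed.

Lemma L2 t (x y u v : 'rV['Z_2]_t) : x + y = u + v -> y = v + (u + x).
Proof.
move=> E; have -> : y = (x + y) + x.
  by rewrite addrC addrA addZ2vv add0r.
by rewrite E [u + v]addrC -addrA.
Qed.

Lemma sum_pick (R : realType) (T T' : finType) (f : T -> T') (g : T' -> T)
  (fK : cancel f g) (gK : cancel g f) (v : T') (F : T -> R) :
  \sum_l F l * (f l == v)%:R = F (g v).
Proof.
rewrite (bigD1 (g v)) //= gK eqxx mulr1 big1 ?addr0 // => l Hl.
case: eqP => [E|]; last by rewrite mulr0.
by move: Hl; rewrite -E fK eqxx.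
Qed.

Section Main.
Variables (R : realType) (t : nat) (F : finFieldType)
  (iso : F -> 'rV['Z_2]_t) (alpha : 'I_(2 ^ t) -> F) (W : 'M[R]_(2 ^ t)).
Hypothesis Hadd : forall x y, iso (x + y) = iso x + iso y.

Local Notation n := (2 ^ t)%N.
Local Notation ui := (@mxtens_unindex n n).

Lemma inner (x y : 'rV['Z_2]_t) (a b : 'I_n) :
  \sum_d ((x == beta a + beta d)%:R * (y == beta b + beta d)%:R : R)
  = (x + y == beta a + beta b)%:R.
Proof.
have [g bK gK] := beta_bij t.
under eq_bigr => d _ do rewrite eq_sw mulrC.
rewrite (@sum_pick R _ _ _ _ bK gK _ (fun d => ((y == beta b + beta d)%:R : R))) gK.
congr (nat_of_bool _)%:R.
apply/eqP/eqP => [->|E].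
  exact: L1.
exact: L2.
Qed.

Lemma colsum (x : 'rV['Z_2]_t) (a : 'I_n) :
  \sum_d ((x == beta a + beta d)%:R : R) = 1.
Proof.
have [g bK gK] := beta_bij t.
under eq_bigr => d _ do rewrite eq_sw -(mul1r (_%:R)).
by rewrite (@sum_pick R _ _ _ _ bK gK _ (fun d => 1 : R)).
Qed.

Lemma prodE i j p q :
  (Wmat iso alpha W i *m (Wmat iso alpha W j)^T) p q =
  \sum_l W (ui p).1 l * W (ui q).1 l *
     (iso ((alpha i + alpha j) * alpha l) == beta (ui p).2 + beta (ui q).2)%:R.
Proof.
rewrite mxE (reindex (@mxtens_index n n)); last first.
  by exists (@mxtens_unindex n n) => z _; rewrite ?mxtens_indexK ?mxtens_unindexK.
rewrite (eq_bigr (fun z => (W (ui p).1 z.1 * (iso (alpha i * alpha z.1) == beta (ui p).2 + beta z.2)%:R) *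
   (W (ui q).1 z.1 * (iso (alpha j * alpha z.1) == beta (ui q).2 + beta z.2)%:R))); last first.
  by move=> [l d] _; rewrite !mxE !mxtens_indexK !phiE.
rewrite -(pair_bigA _ (fun l d => (W (ui p).1 l * (iso (alpha i * alpha l) == beta (ui p).2 + beta d)%:R) *
   (W (ui q).1 l * (iso (alpha j * alpha l) == beta (ui q).2 + beta d)%:R))).
apply: eq_bigr => l _.
rewrite -[RHS]mulrA mulrDl Hadd -inner !mulr_sumr; apply: eq_bigr => d _.
by rewrite -!mulrA; congr (_ * _); rewrite mulrCA.
Qed.
End Main.


Section Main2.
Variables (R : realType) (t : nat) (F : finFieldType)
  (iso : F -> 'rV['Z_2]_t) (alpha : 'I_(2 ^ t) -> F) (W : 'M[R]_(2 ^ t)).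
Hypothesis Hadd : forall x y, iso (x + y) = iso x + iso y.
Hypothesis HW : hadamard W.

Local Notation n := (2 ^ t)%N.
Local Notation ui := (@mxtens_unindex n n).

Lemma WWTe k m : \sum_l W k l * W m l = n%:R *+ (k == m).
Proof.
have := congr1 (fun M : 'M[R]_n => M k m) HW.2; rewrite !mxE => <-.
by apply: eq_bigr => l _; rewrite mxE.
Qed.

Lemma WWT i : Wmat iso alpha W i *m (Wmat iso alpha W i)^T = (n%:R)%:M.
Proof.
apply/matrixP => p q; rewrite prodE // mxE.
have E : forall l, iso ((alpha i + alpha i) * alpha l) = 0.
  by move=> l; rewrite mulrDl Hadd addZ2vv.
under eq_bigr => l _ do rewrite E.
rewrite -mulr_suml WWTe.
have -> : (0 == beta (ui p).2 + beta (ui q).2) = ((ui p).2 == (ui q).2).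
  by rewrite eq_sw addr0 eq_sym (inj_eq (@beta_inj t)).
rewrite -(inj_eq (can_inj (@mxtens_unindexK n n))).
case: (ui p) => k a; case: (ui q) => m b /=.
rewrite xpair_eqE.
by case: (k == m); case: (a == b); rewrite /= ?mulr1n ?mulr0n ?mulr1 ?mulr0.
Qed.
End Main2.


Lemma pm_mul (R : realType) (x y : R) : (x = 1 \/ x = -1) -> (y = 1 \/ y = -1) ->
  x * y = 1 \/ x * y = -1.
Proof.
by case=> ->; case=> ->; rewrite ?mulr1 ?mulrN1 ?opprK; [left|right|right|left].
Qed.

Lemma pm_sq (R : realType) (x : R) : (x = 1 \/ x = -1) -> x * x = 1.
Proof. by case=> ->; rewrite ?mulr1 ?mulrN1 ?opprK. Qed.

Theorem proposition5p1 (R : realType) (t : nat) (F : finFieldType)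
  (iso : F -> 'rV['Z_2]_t) (alpha : 'I_(2 ^ t) -> F) (W : 'M[R]_(2 ^ t))
  (i j : 'I_(2 ^ t)) :
  (0 < t)%N ->
  #|F| = (2 ^ t)%N ->
  (forall x y, iso (x + y) = iso x + iso y) ->
  bijective iso ->
  bijective alpha ->
  hadamard W ->
  i != j ->
  bush_type (Wmat iso alpha W i *m (Wmat iso alpha W j)^T).
Proof.
move=> _ _ Hadd Hisob Halb HW Hij.
set n := (2 ^ t)%N.
have isoinj := bij_inj Hisob.
have alinj := bij_inj Halb.
have iso0 : iso 0 = 0.
  by apply: (@addrI _ (iso 0)); rewrite -Hadd !addr0.
have Hc : alpha i + alpha j != 0.
  apply/eqP => E; move/eqP: Hij; apply; apply: alinj; apply: isoinj.
  have := congr1 iso E; rewrite Hadd iso0 => E1.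
  by rewrite -[LHS]addr0 -(addZ2vv (iso (alpha j))) addrA E1 add0r.
set gam := fun l => iso ((alpha i + alpha j) * alpha l).
have gaminj : injective gam.
  by move=> l1 l2 /isoinj /(mulfI Hc) /alinj.
have [g gK Kg] : bijective gam.
  by apply: inj_card_bij => //; rewrite card_rowZ2 card_ord.
set M := _ *m _.
have ME : forall p q, M p q =
    W (mxtens_unindex p).1 (g (beta (mxtens_unindex p).2 + beta (mxtens_unindex q).2)) *
    W (mxtens_unindex q).1 (g (beta (mxtens_unindex p).2 + beta (mxtens_unindex q).2)).
  move=> p q; rewrite /M prodE //.
  exact: (@sum_pick R _ _ gam g gK Kg _ (fun l => W (mxtens_unindex p).1 l * W (mxtens_unindex q).1 l)).
have Wpm := HW.1.
split; [split|split].
- by move=> p q; rewrite ME; apply: pm_mul.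
- have hn : (n%:R : R) != 0 by rewrite pnatr_eq0 -lt0n expn_gt0.
  have WTW : forall i', (Wmat iso alpha W i')^T *m Wmat iso alpha W i' = (n%:R)%:M.
    move=> i'; set A := Wmat iso alpha W i'.
    have : A *m (n%:R^-1 *: A^T) = 1%:M.
      by rewrite -scalemxAr WWT // scale_scalar_mx mulVf.
    move/mulmx1C; rewrite -scalemxAl => H.
    have := congr1 (fun X => (n%:R : R) *: X) H; rewrite /= scalerA mulfV // scale1r => ->.
    by rewrite scale_scalar_mx mulr1.
  rewrite /M trmx_mul trmxK mulmxA -(mulmxA (Wmat iso alpha W i)) WTW.
  by rewrite mul_mx_scalar -scalemxAl WWT // scale_scalar_mx natrM.
- move=> k; apply/matrixP => a b; rewrite [in RHS]mxE /block mxE ME !mxtens_indexK /=.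
  exact: pm_sq.
- move=> k m Hkm; split; apply/matrixP => a b; rewrite !mxE.
  + under eq_bigr => d _ do rewrite [const_mx _ _ _]mxE mulr1 /block mxE prodE // !mxtens_indexK.
    rewrite exchange_big /=.
    under eq_bigr => l _ do rewrite -mulr_sumr colsum mulr1.
    by rewrite WWTe // (negbTE Hkm).
  + under eq_bigr => d _ do rewrite [const_mx _ _ _]mxE mul1r /block mxE prodE // !mxtens_indexK /= [beta _ + beta _]addrC.
    rewrite exchange_big /=.
    under eq_bigr => l _ do rewrite -mulr_sumr colsum mulr1.
    by rewrite WWTe // (negbTE Hkm).
Qed.
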